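(* Let $k$ be a field and $A$ a $k$-algebra with $\dim_k A\geq 4$. Then exactly one of the following holds: (i) there exist $x,y\in A$ such that $\dim_k(k1+kx+ky+kxy)\geq 4$; (ii) there exists a $k$-subspace $V$ of $A$ with $A=k1\oplus V$ and $V\cdot V=0$; (iii) there exists a $k$-subspace $V$ of $A$ and elements $e,f\in A$ with $A=ke\oplus kf\oplus V$, $V\cdot V=eV=Vf=0$, $e^2=e$, $f^2=f$, $ef=fe=0$, $e+f=1$; equivalently $A\simeq \begin{bmatrix} k & V\\ 0 & k\end{bmatrix}$.
   Context: Here a $k$-algebra means an associative unital $k$-algebra, not necessarily commutative (case (iii) is non-commutative). For subsets $X,Y\subseteq A$, $X\cdot Y$ denotes the set (span) of products $xy$ with $x\in X$, $y\in Y$. *)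

(* Defs.v *)
From HB Require Import structures.
From mathcomp Require Import all_boot all_order all_algebra.
Set Implicit Arguments. Unset Strict Implicit. Unset Printing Implicit Defensive.
Import GRing.Theory.
Local Open Scope ring_scope.

(* Linear-algebra notions inside an arbitrary (possibly infinite-dimensional)
   associative unital k-algebra A : algType F. Subspaces are Prop-predicates. *)
Section LinAlg.
Variables (F : fieldType) (A : algType F).

Definition is_subspace (V : A -> Prop) : Prop :=
  V 0 /\ forall (c : F) (u v : A), V u -> V v -> V (c *: u + v).

Definition lin_indep4 (a b c d : A) : Prop :=
  forall α β γ δ : F, α *: a + β *: b + γ *: c + δ *: d = 0 ->
    [/\ α = 0, β = 0, γ = 0 & δ = 0].

Definition dim_ge4 (S : A -> Prop) : Prop :=
  exists a b c d, [/\ S a, S b, S c, S d & lin_indep4 a b c d].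

Definition span4 (a b c d : A) : A -> Prop :=
  fun w => exists α β γ δ : F, w = α *: a + β *: b + γ *: c + δ *: d.

Definition dsum_k1 (V : A -> Prop) : Prop :=
  (forall a : A, exists (c : F) (v : A), V v /\ a = c *: 1 + v) /\
  (forall (c : F) (v : A), V v -> c *: 1 + v = 0 -> c = 0 /\ v = 0).

Definition dsum_ef (e f : A) (V : A -> Prop) : Prop :=
  (forall a : A, exists (c d : F) (v : A), V v /\ a = c *: e + d *: f + v) /\
  (forall (c d : F) (v : A), V v -> c *: e + d *: f + v = 0 ->
     [/\ c = 0, d = 0 & v = 0]).

Definition sq_zero (V : A -> Prop) : Prop :=
  forall u v : A, V u -> V v -> u * v = 0.

Definition case_i : Prop :=
  exists x y : A, dim_ge4 (span4 1 x y (x * y)).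

Definition case_ii : Prop :=
  exists V : A -> Prop, [/\ is_subspace V, dsum_k1 V & sq_zero V].

Definition case_iii : Prop :=
  exists (V : A -> Prop) (e f : A),
    [/\ is_subspace V, dsum_ef e f V, sq_zero V,
        (forall v, V v -> e * v = 0) & (forall v, V v -> v * f = 0)] /\
    [/\ e * e = e, f * f = f, e * f = 0, f * e = 0 & e + f = 1].

End LinAlg.

(* Main.v *)
Require Import Defs.
From HB Require Import structures.
From mathcomp Require Import all_boot all_order all_algebra.
From Stdlib Require Import Classical.
From mathcomp Require Import ring.
Set Implicit Arguments. Unset Strict Implicit. Unset Printing Implicit Defensive.
Import GRing.Theory.
Local Open Scope ring_scope.

Definition inspan3 {F : fieldType} {A : algType F} (u1 u2 u3 w : A) :=
  exists p q r : F, w = p *: u1 + q *: u2 + r *: u3.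
Definition indep2 {F : fieldType} {A : algType F} (u1 u2 : A) :=
  forall a b : F, a *: u1 + b *: u2 = 0 -> a = 0 /\ b = 0.
Definition indep3 {F : fieldType} {A : algType F} (u1 u2 u3 : A) :=
  forall a b c : F, a *: u1 + b *: u2 + c *: u3 = 0 -> [/\ a = 0, b = 0 & c = 0].

Lemma solve_last (F : fieldType) (A : algType F) (s w : A) (c : F) :
  s + c *: w = 0 -> c != 0 -> w = - (c^-1 *: s).
Proof.
move=> /eqP; rewrite addr_eq0 => /eqP H hc.
by rewrite H scalerN opprK scalerA mulVf // scale1r.
Qed.

Lemma ext3 (F : fieldType) (A : algType F) (u1 u2 w : A) :
  indep2 u1 u2 -> ~ (exists p q : F, w = p *: u1 + q *: u2) -> indep3 u1 u2 w.
Proof.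
move=> H2 Hn a b c H.
have hc : c = 0.
  apply/eqP; apply: contra_notT Hn => hc.
  move: (solve_last H hc) => ->.
  exists (- (c^-1 * a)), (- (c^-1 * b)).
  by rewrite scalerDr !scalerA opprD -!scaleNr.
move: H; rewrite hc scale0r addr0 => /H2 [-> ->]; by [].
Qed.

Lemma ext4 (F : fieldType) (A : algType F) (u1 u2 u3 w : A) :
  indep3 u1 u2 u3 -> ~ inspan3 u1 u2 u3 w -> lin_indep4 u1 u2 u3 w.
Proof.
move=> H3 Hn a b c d H.
have hd : d = 0.
  apply/eqP; apply: contra_notT Hn => hd.
  move: (solve_last H hd) => ->.
  exists (- (d^-1 * a)), (- (d^-1 * b)), (- (d^-1 * c)).
  by rewrite !scalerDr !scalerA !opprD -!scaleNr.
move: H; rewrite hd scale0r addr0 => /H3 [-> -> ->]; by [].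
Qed.

Lemma dep_span (F : fieldType) (A : algType F) (u1 u2 u3 w : A) :
  indep3 u1 u2 u3 -> ~ lin_indep4 u1 u2 u3 w -> inspan3 u1 u2 u3 w.
Proof. move=> H3 Hn; apply: NNPP => Hs; apply: Hn; exact: ext4. Qed.
Lemma F1 (F : fieldType) (A : algType F) (u1 u2 u3 a b c d : A) :
  inspan3 u1 u2 u3 a -> inspan3 u1 u2 u3 b -> inspan3 u1 u2 u3 c ->
  inspan3 u1 u2 u3 d -> ~ lin_indep4 a b c d.
Proof.
move=> [a1 [a2 [a3 ->]]] [b1 [b2 [b3 ->]]] [c1 [c2 [c3 ->]]] [d1 [d2 [d3 ->]]] Hind.
pose M : 'M[F]_(4,3) := \matrix_(i < 4, j < 3) nth 0 (nth [::] [:: [:: a1; a2; a3]; [:: b1; b2; b3]; [:: c1;c2;c3]; [:: d1;d2;d3]] i) j.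
pose u (j : 'I_3) := nth 0 [:: u1; u2; u3] j.
pose g (i : 'I_4) := \sum_j M i j *: u j.
have hK : kermx M != 0.
  rewrite kermx_eq0 /row_free neq_ltn.
  by rewrite (leq_ltn_trans (rank_leq_col M)).
have [i hi] : exists i, row i (kermx M) != 0.
  apply/existsP; move: hK; apply: contraR; rewrite negb_exists => /forallP H.
  by apply/eqP/row_matrixP => i; rewrite row0; apply/eqP; move: (H i); rewrite negbK.
set l := row i (kermx M) in hi.
have hlM : l *m M = 0 by rewrite /l -row_mul mulmx_ker row0.
have hsum : \sum_(k < 4) l 0 k *: g k = 0.
  rewrite /g.
  under eq_bigr do rewrite scaler_sumr.
  rewrite exchange_big /=.
  apply: big1 => j _.
  under eq_bigr do rewrite scalerA.
  rewrite -scaler_suml.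
  have -> : \sum_(k < 4) l 0 k * M k j = (l *m M) 0 j by rewrite mxE.
  by rewrite hlM mxE scale0r.
clearbody l.
move: hsum; rewrite !big_ord_recr big_ord0 /= add0r /g.
rewrite !big_ord_recr !big_ord0 /= !add0r !mxE /=.
move=> /Hind [h0 h1 h2 h3].
move/eqP: hi; apply; apply/rowP => k; rewrite mxE.
case: k => [[|[|[|[|k]]]] Hk] //.
- by rewrite -h0; congr (l 0 _); apply: val_inj.
- by rewrite -h1; congr (l 0 _); apply: val_inj.
- by rewrite -h2; congr (l 0 _); apply: val_inj.
- by rewrite -h3; congr (l 0 _); apply: val_inj.
Qed.

Lemma extract (F : fieldType) (A : algType F) (a b c d u1 u2 : A) :
  lin_indep4 a b c d -> indep2 u1 u2 -> exists y1 y2, lin_indep4 u1 u2 y1 y2.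
Proof.
move=> H4 H2.
have [y1 Hy1] : exists y, ~ inspan3 u1 u2 0 y.
  apply: NNPP => H; apply: (@F1 _ _ u1 u2 0 a b c d) => //;
  by apply: NNPP => Hn; apply: H; eexists; exact: Hn.
have H3 : indep3 u1 u2 y1.
  apply: ext3 => // -[p [q Hpq]]; apply: Hy1; exists p, q, 0.
  by rewrite scaler0 addr0.
have [y2 Hy2] : exists y, ~ inspan3 u1 u2 y1 y.
  apply: NNPP => H; apply: (@F1 _ _ u1 u2 y1 a b c d) => //;
  by apply: NNPP => Hn; apply: H; eexists; exact: Hn.
by exists y1, y2; apply: ext4.
Qed.
Lemma mulA0 (F : fieldType) (A : algType F) (u v : A) : u * v = 0 -> forall x, x * u * v = 0.
Proof. by move=> h x; rewrite -mulrA h mulr0. Qed.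
Lemma mulAI (F : fieldType) (A : algType F) (u : A) : u * u = u -> forall x, x * u * u = x * u.
Proof. by move=> h x; rewrite -mulrA h. Qed.

Ltac psimp ee ff ef fe H :=
  do 3 rewrite ?mulrDl ?mulrDr -?scalerAl -?scalerAr in H;
  do 4 rewrite ?mulrA ?ee ?ff ?ef ?fe ?(mulA0 ef) ?(mulA0 fe) ?(mulAI ee) ?(mulAI ff)
     ?mul0r ?mulr0 ?mul1r ?mulr1 ?scaler0 ?scale0r ?addr0 ?add0r in H.

Lemma scal0 (F : fieldType) (A : algType F) (c : F) (v : A) : c *: v = 0 -> v != 0 -> c = 0.
Proof. by move/eqP; rewrite scaler_eq0 => /orP [/eqP|/eqP ->] //; rewrite eqxx. Qed.

Lemma notI_NI (F : fieldType) (A : algType F) :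
  ~ case_i A -> forall x y : A, ~ lin_indep4 1 x y (x * y).
Proof.
move=> H x y Hl; apply: H; exists x, y, 1, x, y, (x * y); split => //.
- by exists 1, 0, 0, 0; rewrite !scale0r !addr0 scale1r.
- by exists 0, 1, 0, 0; rewrite !scale0r !addr0 add0r scale1r.
- by exists 0, 0, 1, 0; rewrite !scale0r !addr0 !add0r scale1r.
- by exists 0, 0, 0, 1; rewrite !scale0r !add0r scale1r.
Qed.

Lemma P1 (F : fieldType) (A : algType F) (e f : A)
  (ee : e * e = e) (ff : f * f = f) (ef : e * f = 0) (fe : f * e = 0)
  (ef1 : e + f = 1) (en0 : e != 0) (fn0 : f != 0)
  (NI : forall x y : A, ~ lin_indep4 1 x y (x * y)) (y : A) :
  e * y * f = 0 \/ f * y * e = 0.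
Proof.
apply: NNPP => /not_or_and [h1 h2].
have {}h1 : e * y * f != 0 by apply/eqP.
have {}h2 : f * y * e != 0 by apply/eqP.
apply: (NI e y) => a b c d R.
have R1 := congr1 (fun t => f * t * e) R; rewrite /= in R1; psimp ee ff ef fe R1.
have hc := scal0 R1 h2; rewrite hc in R R1.
have R2 := congr1 (fun t => e * t * f) R; rewrite /= in R2; psimp ee ff ef fe R2.
have hd := scal0 R2 h1; rewrite hd in R.
have R3 := congr1 (fun t => f * t * f) R; rewrite /= in R3; psimp ee ff ef fe R3.
have ha := scal0 R3 fn0; rewrite ha in R.
psimp ee ff ef fe R.
by have hb := scal0 R en0.
Qed.
Definition lc4 {F : fieldType} {A : algType F} (v1 v2 v3 v4 : A) (a b c d : F) : A :=
  a *: v1 + b *: v2 + c *: v3 + d *: v4.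

Lemma lc4D (F : fieldType) (A : algType F) (v1 v2 v3 v4 : A) a b c d a' b' c' d' :
  lc4 v1 v2 v3 v4 a b c d + lc4 v1 v2 v3 v4 a' b' c' d' =
  lc4 v1 v2 v3 v4 (a + a') (b + b') (c + c') (d + d').
Proof.
rewrite /lc4 !scalerDl addrACA; congr (_ + _); rewrite addrACA; congr (_ + _);
exact: addrACA.
Qed.

Lemma lc4Z (F : fieldType) (A : algType F) (v1 v2 v3 v4 : A) k a b c d :
  k *: lc4 v1 v2 v3 v4 a b c d = lc4 v1 v2 v3 v4 (k * a) (k * b) (k * c) (k * d).
Proof. by rewrite /lc4 !scalerDr !scalerA. Qed.

Lemma lc4N (F : fieldType) (A : algType F) (v1 v2 v3 v4 : A) a b c d :
  - lc4 v1 v2 v3 v4 a b c d = lc4 v1 v2 v3 v4 (- a) (- b) (- c) (- d).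
Proof. by rewrite -scaleN1r lc4Z !mulN1r. Qed.

Lemma lc4_1 (F : fieldType) (A : algType F) (v1 v2 v3 v4 : A) : v1 = lc4 v1 v2 v3 v4 1 0 0 0.
Proof. by rewrite /lc4 !scale0r !addr0 scale1r. Qed.
Lemma lc4_2 (F : fieldType) (A : algType F) (v1 v2 v3 v4 : A) : v2 = lc4 v1 v2 v3 v4 0 1 0 0.
Proof. by rewrite /lc4 !scale0r !addr0 add0r scale1r. Qed.
Lemma lc4_3 (F : fieldType) (A : algType F) (v1 v2 v3 v4 : A) : v3 = lc4 v1 v2 v3 v4 0 0 1 0.
Proof. by rewrite /lc4 !scale0r !addr0 !add0r scale1r. Qed.
Lemma lc4_4 (F : fieldType) (A : algType F) (v1 v2 v3 v4 : A) : v4 = lc4 v1 v2 v3 v4 0 0 0 1.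
Proof. by rewrite /lc4 !scale0r !add0r scale1r. Qed.
Lemma lc4_0 (F : fieldType) (A : algType F) (v1 v2 v3 v4 : A) : (0 : A) = lc4 v1 v2 v3 v4 0 0 0 0.
Proof. by rewrite /lc4 !scale0r !add0r. Qed.

Ltac lcfold P :=
  rewrite /P; repeat progress rewrite ?lc4D ?lc4Z ?lc4N;
  congr (lc4 _ _ _ _ _ _ _ _); ring.

Ltac lcsolve4 v1 v2 v3 v4 :=
  let P := fresh "P" in
  pose P := lc4 v1 v2 v3 v4;
  try rewrite (lc4_1 v1 v2 v3 v4) -/P; try rewrite (lc4_2 v1 v2 v3 v4) -/P;
  try rewrite (lc4_3 v1 v2 v3 v4) -/P; try rewrite (lc4_4 v1 v2 v3 v4) -/P;
  try rewrite (lc4_0 v1 v2 v3 v4) -/P;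
  lcfold P.
Ltac lcsolve3 v1 v2 v3 :=
  let P := fresh "P" in
  pose P := lc4 v1 v2 v3 0;
  try rewrite (lc4_1 v1 v2 v3 0) -/P; try rewrite (lc4_2 v1 v2 v3 0) -/P;
  try rewrite (lc4_3 v1 v2 v3 0) -/P;
  try rewrite (lc4_0 v1 v2 v3 0) -/P;
  lcfold P.
Ltac lcsolve2 v1 v2 :=
  let P := fresh "P" in
  pose P := lc4 v1 v2 0 0;
  try rewrite (lc4_1 v1 v2 0 0) -/P; try rewrite (lc4_2 v1 v2 0 0) -/P;
  try rewrite (lc4_0 v1 v2 0 0) -/P;
  lcfold P.


Lemma notmult (F : fieldType) (A : algType F) (w f : A) (a b : F) :
  ~ (exists c, w = c *: f) -> f != 0 -> a *: f + b *: w = 0 -> a = 0 /\ b = 0.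
Proof.
move=> Hn fn0 H.
have hb : b = 0.
  apply/eqP; apply: contra_notT Hn => hb.
  move: (solve_last H hb) => ->.
  by exists (- (b^-1 * a)); rewrite scalerA scaleNr.
by move: H; rewrite hb scale0r addr0 => /scal0 -> //.
Qed.

Lemma P2 (F : fieldType) (A : algType F) (e f : A)
  (ee : e * e = e) (ff : f * f = f) (ef : e * f = 0) (fe : f * e = 0)
  (ef1 : e + f = 1) (en0 : e != 0) (fn0 : f != 0)
  (NI : forall x y : A, ~ lin_indep4 1 x y (x * y)) (a b : A) :
  ~ (exists c, e * a * e = c *: e) -> ~ (exists d, f * b * f = d *: f) -> False.
Proof.
move=> ha hb.
apply: (NI (e * a * e + f * b * f) e) => al be ga de R.
have R1 := congr1 (fun t => f * t * f) R; rewrite /= in R1; psimp ee ff ef fe R1.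
have [h1 h2] := notmult hb fn0 R1; rewrite h1 h2 in R.
have R2 := congr1 (fun t => e * t * e) R; rewrite /= in R2; psimp ee ff ef fe R2.
have [h3 h4] := notmult ha en0 R2; by [].
Qed.

Lemma P3 (F : fieldType) (A : algType F) (e f : A)
  (ee : e * e = e) (ff : f * f = f) (ef : e * f = 0) (fe : f * e = 0)
  (ef1 : e + f = 1) (en0 : e != 0) (fn0 : f != 0)
  (NI : forall x y : A, ~ lin_indep4 1 x y (x * y)) (b c : A) :
  ~ (exists d, f * b * f = d *: f) -> f * c * e = 0.
Proof.
move=> hb; apply: NNPP => hv; have {}hv : f * c * e != 0 by apply/eqP.
apply: (NI (f * b * f + f * c * e) e) => al be ga de R.
have R1 := congr1 (fun t => f * t * f) R; rewrite /= in R1; psimp ee ff ef fe R1.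
have [h1 h2] := notmult hb fn0 R1; rewrite h1 h2 in R.
have R2 := congr1 (fun t => e * t * e) R; rewrite /= in R2; psimp ee ff ef fe R2.
have h3 := scal0 R2 en0; rewrite h3 in R.
psimp ee ff ef fe R.
by have h4 := scal0 R hv.
Qed.

Lemma P4 (F : fieldType) (A : algType F) (e f : A)
  (ee : e * e = e) (ff : f * f = f) (ef : e * f = 0) (fe : f * e = 0)
  (ef1 : e + f = 1) (en0 : e != 0) (fn0 : f != 0)
  (NI : forall x y : A, ~ lin_indep4 1 x y (x * y)) (a c : A) :
  ~ (exists d, e * a * e = d *: e) -> f * c * e = 0.
Proof.
move=> ha; apply: NNPP => hv; have {}hv : f * c * e != 0 by apply/eqP.
apply: (NI f (e * a * e + f * c * e)) => al be ga de R.
have R1 := congr1 (fun t => e * t * e) R; rewrite /= in R1; psimp ee ff ef fe R1.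
have [h1 h2] := notmult ha en0 R1; rewrite h1 h2 in R.
have R2 := congr1 (fun t => f * t * f) R; rewrite /= in R2; psimp ee ff ef fe R2.
have h3 := scal0 R2 fn0; rewrite h3 in R.
psimp ee ff ef fe R.
by have h4 := scal0 R hv.
Qed.

Lemma L1 (F : fieldType) (A : algType F)
  (NI : forall x y : A, ~ lin_indep4 1 x y (x * y)) (x y : A) :
  indep3 1 x y -> exists p q r : F, x * y = p *: 1 + q *: x + r *: y.
Proof. move=> H3; exact: (dep_span H3 (NI x y)). Qed.

Lemma peirce (F : fieldType) (A : algType F) (e f : A) (ef1 : e + f = 1) (y : A) :
  y = e * y * e + e * y * f + f * y * e + f * y * f.
Proof.
by rewrite -{1}[y]mul1r -{1}[y]mulr1 -ef1 !mulrDl !mulrDr !mulrA !addrA.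
Qed.

Lemma P5 (F : fieldType) (A : algType F) (e f : A)
  (ee : e * e = e) (ff : f * f = f) (ef : e * f = 0) (fe : f * e = 0)
  (ef1 : e + f = 1) (en0 : e != 0) (fn0 : f != 0)
  (NI : forall x y : A, ~ lin_indep4 1 x y (x * y)) (a0 b0 c0 d0 : A) :
  lin_indep4 a0 b0 c0 d0 ->
  (forall c, e * c * f = 0) -> (forall c, f * c * e = 0) ->
  (forall b, exists d, f * b * f = d *: f) -> False.
Proof.
move=> H4 hef hfe hff.
have H2 : indep2 e f.
  move=> al be R.
  have R1 := congr1 (fun t => e * t * e) R; rewrite /= in R1; psimp ee ff ef fe R1.
  have h1 := scal0 R1 en0; rewrite h1 scale0r add0r in R.
  by have h2 := scal0 R fn0.
have [y1 [y2 Hy]] := extract H4 H2.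
have [d1 hd1] := hff y1; have [d2 hd2] := hff y2.
have hy1 : y1 = e * y1 * e + d1 *: f by rewrite {1}(peirce ef1 y1) hef hfe hd1 addr0 addr0.
have hy2 : y2 = e * y2 * e + d2 *: f by rewrite {1}(peirce ef1 y2) hef hfe hd2 addr0 addr0.
have H3 : indep3 e (e * y1 * e) (e * y2 * e).
  move=> al be ga R.
  suff /Hy [-> _ -> ->] : al *: e + (- (be * d1 + ga * d2)) *: f + be *: y1 + ga *: y2 = 0 by [].
  rewrite -R {1}hy1 {1}hy2.
  lcsolve4 (e * y1 * e) (e * y2 * e) e f.
have H3' : indep3 1 (e * y1 * e) (e * y2 * e).
  move=> al be ga R.
  have R1 := congr1 (fun t => f * t * f) R; rewrite /= in R1; psimp ee ff ef fe R1.
  have h1 := scal0 R1 fn0; rewrite h1 scale0r in R.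
  have [] := H3 0 be ga; first by rewrite scale0r.
  by [].
have [p [q [r hz]]] := L1 NI H3'.
have hp : p = 0.
  have R1 := congr1 (fun t => f * t * f) hz; rewrite /= in R1; psimp ee ff ef fe R1.
  by apply: (scal0 (esym R1) fn0).
rewrite hp scale0r add0r in hz; psimp ee ff ef fe hz.
pose a := r + 1; pose c := q + 1 + q * r.
apply: (NI (e * y1 * e + a *: f) (e * y2 * e + c *: f)) => al be ga de R.
have R1 := congr1 (fun t => e * t * e) R; rewrite /= in R1; psimp ee ff ef fe R1.
rewrite hz in R1.
have [h1 h2 h3] : [/\ al = 0, be + de * q = 0 & ga + de * r = 0].
  apply: H3; rewrite -R1; lcsolve3 (e * y1 * e) (e * y2 * e) e.
have R2 := congr1 (fun t => f * t * f) R; rewrite /= in R2; psimp ee ff ef fe R2.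
have hs : al + be * a + ga * c + de * (a * c) = 0.
  apply: (scal0 _ fn0); rewrite -R2; lcsolve2 f f.
have hde : de = 0.
  have -> : de = (al + be * a + ga * c + de * (a * c)) - al - (be + de * q) * a - (ga + de * r) * c.
    rewrite /a /c; ring.
  by rewrite hs h1 h2 h3; ring.
split => //.
- by move/eqP: h2; rewrite hde mul0r addr0 => /eqP.
- by move/eqP: h3; rewrite hde mul0r addr0 => /eqP.
Qed.

Lemma build_iii (F : fieldType) (A : algType F) (e f : A)
  (ee : e * e = e) (ff : f * f = f) (ef : e * f = 0) (fe : f * e = 0)
  (ef1 : e + f = 1) (en0 : e != 0) (fn0 : f != 0) :
  (forall a, exists c, e * a * e = c *: e) ->
  (forall b, exists d, f * b * f = d *: f) ->
  (forall c, e * c * f = 0) -> case_iii A.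
Proof.
move=> hE hF hef.
exists (fun v => f * v * e = v), e, f; split; split => //.
- split; first by rewrite mulr0 mul0r.
  move=> c u v hu hv; rewrite mulrDr mulrDl -scalerAr -scalerAl hu hv //.
- split.
  + move=> a; have [c hc] := hE a; have [d hd] := hF a.
    exists c, d, (f * a * e); split; first by rewrite !mulrA ff mulAI.
    rewrite {1}(peirce ef1 a) hc hd hef.
    lcsolve3 (f * a * e) e f.
  + move=> c d v hv R; rewrite -hv in R.
    have R1 := congr1 (fun t => e * t * e) R; rewrite /= in R1; psimp ee ff ef fe R1.
    have h1 := scal0 R1 en0; rewrite h1 in R.
    have R2 := congr1 (fun t => f * t * f) R; rewrite /= in R2; psimp ee ff ef fe R2.
    have h2 := scal0 R2 fn0; rewrite h2 in R.
    psimp ee ff ef fe R.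
    by split => //; rewrite -hv.
- by move=> u v hu hv; rewrite -hu -hv !mulrA (mulA0 ef) !mul0r.
- by move=> v hv; rewrite -hv !mulrA ef !mul0r.
- by move=> v hv; rewrite -hv (mulA0 ef).
Qed.

Lemma case2 (F : fieldType) (A : algType F) (e : A) (a0 b0 c0 d0 : A)
  (ee : e * e = e) (en0 : e != 0) (en1 : e != 1)
  (NI : forall x y : A, ~ lin_indep4 1 x y (x * y)) :
  lin_indep4 a0 b0 c0 d0 -> case_iii A.
Proof.
move=> H4.
set f := 1 - e.
have ff : f * f = f by rewrite /f mulrBl mul1r mulrBr mulr1 ee subrr subr0.
have ef : e * f = 0 by rewrite /f mulrBr mulr1 ee subrr.
have fe : f * e = 0 by rewrite /f mulrBl mul1r ee subrr.
have ef1 : e + f = 1 by rewrite /f addrC subrK.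
have fe1 : f + e = 1 by rewrite addrC.
have fn0 : f != 0 by rewrite /f subr_eq0 eq_sym.
clearbody f.
have hE : (forall a, exists c, e * a * e = c *: e) \/ (forall b, exists d, f * b * f = d *: f).
  apply: NNPP => /not_or_and [/not_all_ex_not [a ha] /not_all_ex_not [b hb]].
  exact: (P2 ee ff ef fe ef1 en0 fn0 NI ha hb).
have [EF0|EF0] := classic (forall c, e * c * f = 0);
have [FE0|FE0] := classic (forall c, f * c * e = 0).
- case: hE => hE.
  + by case: (P5 ff ee fe ef fe1 fn0 en0 NI H4 FE0 EF0 hE).
  + by case: (P5 ee ff ef fe ef1 en0 fn0 NI H4 EF0 FE0 hE).
- apply: (build_iii ee ff ef fe ef1 en0 fn0 _ _ EF0).
  + move=> a; apply: NNPP => ha; apply: FE0 => c.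
    by apply: (P4 ee ff ef fe ef1 en0 fn0 NI (a := a)) => -[d hd]; apply: ha; exists d.
  + move=> b; apply: NNPP => hb; apply: FE0 => c.
    by apply: (P3 ee ff ef fe ef1 en0 fn0 NI (b := b)) => -[d hd]; apply: hb; exists d.
- apply: (build_iii ff ee fe ef fe1 fn0 en0 _ _ FE0).
  + move=> a; apply: NNPP => ha; apply: EF0 => c.
    by apply: (P4 ff ee fe ef fe1 fn0 en0 NI (a := a)) => -[d hd]; apply: ha; exists d.
  + move=> b; apply: NNPP => hb; apply: EF0 => c.
    by apply: (P3 ff ee fe ef fe1 fn0 en0 NI (b := b)) => -[d hd]; apply: hb; exists d.
- exfalso.
  have [c1 h1] := not_all_ex_not _ _ FE0.
  have [c2 h2] := not_all_ex_not _ _ EF0.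
  have := P1 ee ff ef fe ef1 en0 fn0 NI (e * c2 * f + f * c1 * e).
  case=> R; psimp ee ff ef fe R; [exact: h2 | exact: h1].
Qed.

Lemma indep2_1 (F : fieldType) (A : algType F) (x : A) :
  ~ (exists c, x = c *: 1) -> indep2 1 x.
Proof. move=> hx a b; exact: (notmult hx (oner_neq0 A)). Qed.

Lemma L2 (F : fieldType) (A : algType F)
  (NI : forall x y : A, ~ lin_indep4 1 x y (x * y)) (x y : A) :
  indep3 1 x y -> inspan3 1 x y (x * x).
Proof.
move=> H3.
have [p [q [r h1]]] := L1 NI H3.
have H3' : indep3 1 x (x + y).
  move=> a b c R.
  have [ha h2 hc] : [/\ a = 0, b + c = 0 & c = 0].
    by apply: H3; rewrite -R; lcsolve3 x y (1 : A).
  by split => //; move: h2; rewrite hc addr0.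
have [p' [q' [r' h2]]] := L1 NI H3'.
exists (p' - p), (q' + r' - q), (r' - r).
have -> : x * x = x * (x + y) - x * y by rewrite mulrDr addrK.
rewrite h1 h2; lcsolve3 x y (1 : A).
Qed.

Lemma Lquad (F : fieldType) (A : algType F)
  (NI : forall x y : A, ~ lin_indep4 1 x y (x * y)) (a0 b0 c0 d0 : A) :
  lin_indep4 a0 b0 c0 d0 -> forall x : A,
  (exists c, x = c *: 1) \/
  exists (a b : F) (y : A), indep3 1 x y /\ x * x = a *: 1 + b *: x.
Proof.
move=> H4 x; case: (classic (exists c, x = c *: 1)) => hx; [by left|right].
have [y1 [y2 Hy]] := extract H4 (indep2_1 hx).
have H31 : indep3 1 x y1.
  move=> a b c R; have [] := Hy a b c 0; first by rewrite scale0r addr0.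
  by [].
have H32 : indep3 1 x y2.
  move=> a b c R; have [] := Hy a b 0 c; first by rewrite scale0r addr0 -R.
  by [].
have [s1 [t1 [u1 e1]]] := L2 NI H31.
have [s2 [t2 [u2 e2]]] := L2 NI H32.
have [_ _ hu1 _] : [/\ s1 - s2 = 0, t1 - t2 = 0, u1 = 0 & - u2 = 0].
  apply: Hy; have : x * x - x * x = 0 by rewrite subrr.
  move=> <-; rewrite {1}e1 e2; lcsolve4 x y1 y2 (1 : A).
exists s1, t1, y1; split => //.
by rewrite e1 hu1 scale0r addr0.
Qed.

Lemma Lnoroot (F : fieldType) (A : algType F)
  (NI : forall x y : A, ~ lin_indep4 1 x y (x * y)) (x y : A) (a b : F) :
  indep3 1 x y -> x * x = a *: 1 + b *: x ->
  (forall l, l * l - b * l - a != 0) -> False.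
Proof.
move=> H3 hx2 hroot.
apply: (NI x y) => al be ga de R.
pose s := (ga + de * b) *: (1 : A) - de *: x.
have E : s * (al *: 1 + be *: x + ga *: y + de *: (x * y)) =
  (al * (ga + de * b) - be * de * a) *: 1 + (be * ga - al * de) *: x +
  (ga * ga + ga * de * b - a * de * de) *: y.
  rewrite /s.
  do 3 rewrite ?mulrBl ?mulrDl ?mulrDr -?scalerAl -?scalerAr ?mul1r ?mulr1 ?mulrA ?hx2.
  lcsolve4 (x * y) x y (1 : A).
rewrite R mulr0 in E.
have [_ _ hN] := H3 _ _ _ (esym E).
have hde : de = 0.
  apply/eqP; apply: contraT => hde.
  pose l := - (ga / de).
  have : (l * l - b * l - a) * (de * de) = ga * ga + ga * de * b - a * de * de.
    by rewrite /l; field.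
  rewrite hN => /eqP; rewrite mulf_eq0 (negbTE (hroot l)) /= mulf_eq0 orbb.
  by rewrite (negbTE hde).
rewrite hde !mulr0 !mul0r subr0 addr0 in hN.
have hga : ga = 0 by move/eqP: hN; rewrite mulf_eq0 orbb => /eqP.
rewrite hga hde !scale0r !addr0 in R.
have h := H3 al be 0; rewrite scale0r addr0 in h.
by have [-> -> _] := h R.
Qed.

Lemma Ldec (F : fieldType) (A : algType F)
  (NI : forall x y : A, ~ lin_indep4 1 x y (x * y)) (a0 b0 c0 d0 : A)
  (H4 : lin_indep4 a0 b0 c0 d0)
  (NE : forall e : A, e * e = e -> e = 0 \/ e = 1) (x : A) :
  exists (c : F) (n : A), n * n = 0 /\ x = c *: 1 + n.
Proof.
case: (Lquad NI H4 x) => [[c ->]|[a [b [y [H3 hx2]]]]].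
  by exists c, 0; rewrite mulr0 addr0.
case: (classic (exists l, l * l - b * l - a = 0)) => [[l hl]|hn]; last first.
  exfalso; apply: (Lnoroot NI H3 hx2) => l; apply/eqP => h; apply: hn; by exists l.
pose m := b - l.
have hprod : (x - l *: 1) * (x - m *: 1) = 0.
  have -> : (0 : A) = (- (l * l - b * l - a)) *: 1 by rewrite hl oppr0 scale0r.
  do 3 rewrite ?mulrBl ?mulrDl ?mulrBr ?mulrDr -?scalerAl -?scalerAr ?mul1r ?mulr1 ?hx2.
  rewrite /m; lcsolve2 x (1 : A).
case: (eqVneq l m) => [hlm|hlm].
  exists l, (x - l *: 1); split; first by rewrite {2}hlm.
  by rewrite addrC subrK.
have hlm' : l - m != 0 by rewrite subr_eq0.
have hsq : (x - m *: 1) * (x - m *: 1) = (l - m) *: (x - m *: 1).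
  have hsplit : x - m *: 1 = (x - l *: 1) + (l - m) *: (1 : A) by lcsolve2 x (1 : A).
  by rewrite {1}hsplit mulrDl hprod add0r -scalerAl mul1r.
pose e := (l - m)^-1 *: (x - m *: 1).
have ee : e * e = e.
  rewrite /e -scalerAl -scalerAr hsq !scalerA; congr (_ *: _); field.
  by rewrite hlm'.
case: (NE e ee) => he.
- exists m, 0; rewrite mulr0 addr0; split => //.
  move/eqP: he; rewrite /e scaler_eq0 invr_eq0 (negbTE hlm') /= subr_eq0 => /eqP.
  by [].
- exists l, 0; rewrite mulr0 addr0; split => //.
  have : (l - m) *: e = (l - m) *: 1 by rewrite he.
  rewrite /e scalerA mulfV // scale1r => /eqP; rewrite subr_eq => /eqP ->.
  lcsolve2 x (1 : A).
Qed.

Lemma Lsq (F : fieldType) (A : algType F)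
  (NI : forall x y : A, ~ lin_indep4 1 x y (x * y)) (n m : A) :
  n * n = 0 -> m * m = 0 -> n * m = 0.
Proof.
move=> hn hm.
case: (eqVneq n 0) => [->|nn0]; first by rewrite mul0r.
have hn1 : ~ (exists c, n = c *: 1).
  move=> [c hc]; move/eqP: nn0; apply.
  move: hn; rewrite hc -scalerAl mul1r scalerA => /eqP.
  rewrite scaler_eq0 oner_eq0 orbF mulf_eq0 orbb => /eqP ->.
  by rewrite scale0r.
case: (classic (exists p q, m = p *: 1 + q *: n)) => [[p [q hmpq]]|hno].
- have hnm : n * m = p *: n by rewrite hmpq mulrDr -!scalerAr mulr1 hn scaler0 addr0.
  have : (p * p) *: n = 0.
    by rewrite -scalerA -hnm scalerAl -hnm -mulrA hm mulr0.
  move/scal0 => /(_ nn0) /eqP; rewrite mulf_eq0 orbb => /eqP hp.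
  by rewrite hnm hp scale0r.
- have H3 := ext3 (indep2_1 hn1) hno.
  have [p [q [r hnm]]] := L1 NI H3.
  have E : (r * p) *: 1 + (p + r * q) *: n + (r * r) *: m = 0.
    have : n * (n * m) = 0 by rewrite mulrA hn mul0r.
    move=> <-; rewrite hnm mulrDr mulrDr -!scalerAr mulr1 hn scaler0 addr0 hnm.
    lcsolve3 m n (1 : A).
  have [h1 h2 h3] := H3 _ _ _ E.
  have hr : r = 0 by move/eqP: h3; rewrite mulf_eq0 orbb => /eqP.
  rewrite hr mul0r addr0 in h2.
  have hnm' : n * m = q *: n by rewrite hnm hr h2 !scale0r add0r addr0.
  have : (q * q) *: n = 0.
    by rewrite -scalerA -hnm' scalerAl -hnm' -mulrA hm mulr0.
  move/scal0 => /(_ nn0) /eqP; rewrite mulf_eq0 orbb => /eqP hq.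
  by rewrite hnm' hq scale0r.
Qed.

Lemma case1 (F : fieldType) (A : algType F)
  (NI : forall x y : A, ~ lin_indep4 1 x y (x * y)) (a0 b0 c0 d0 : A)
  (H4 : lin_indep4 a0 b0 c0 d0)
  (NE : forall e : A, e * e = e -> e = 0 \/ e = 1) : case_ii A.
Proof.
exists (fun n => n * n = 0); split.
- split; first by rewrite mulr0.
  move=> c u v hu hv.
  rewrite !mulrDl !mulrDr -!scalerAl -!scalerAr hu hv (Lsq NI hu hv) (Lsq NI hv hu).
  by rewrite !scaler0 !addr0.
- split; first exact: (Ldec NI H4 NE).
  move=> c v hv R.
  have hv' : v = - (c *: 1) by apply/eqP; rewrite -addr_eq0 addrC R.
  have hc : c = 0.
    move: hv; rewrite hv' mulrNN -scalerAl mul1r scalerA => /eqP.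
    rewrite scaler_eq0 oner_eq0 orbF mulf_eq0 orbb => /eqP.
    by [].
  by split => //; rewrite hv' hc scale0r oppr0.
- by move=> u v hu hv; apply: (Lsq NI).
Qed.

Lemma E_span (F : fieldType) (A : algType F) (x y : A) (p q r : F) :
  x * y = p *: 1 + q *: x + r *: y -> ~ dim_ge4 (span4 1 x y (x * y)).
Proof.
move=> hxy [a [b [c [d [ha hb hc hd H]]]]].
have sp : forall t, span4 1 x y (x * y) t -> inspan3 1 x y t.
  move=> t [al [be [ga [de ->]]]].
  exists (al + de * p), (be + de * q), (ga + de * r); rewrite hxy.
  lcsolve3 x y (1 : A).
exact: (F1 (sp _ ha) (sp _ hb) (sp _ hc) (sp _ hd) H).
Qed.

Lemma E1 (F : fieldType) (A : algType F) : case_ii A -> ~ case_i A.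
Proof.
move=> [V [Vs [Hdec Huniq] Vsq]] [x [y Hd]].
have [p [v [hv hx]]] := Hdec x; have [q [w [hw hy]]] := Hdec y.
apply: (E_span (p := - (p * q)) (q := q) (r := p) _ Hd).
rewrite hx hy !mulrDl !mulrDr -!scalerAl -!scalerAr !mul1r !mulr1 (Vsq v w hv hw) addr0.
lcsolve3 v w (1 : A).
Qed.

Lemma E2 (F : fieldType) (A : algType F) : case_iii A -> ~ case_i A.
Proof.
move=> [V [e [f [[Vs [Hdec Huniq] Vsq heV hVf] [ee ff ef fe ef1]]]]] [x [y Hd]].
have [c [d [v [hv hx]]]] := Hdec x; have [c' [d' [w [hw hy]]]] := Hdec y.
have hfw : f * w = w by rewrite -{2}[w]mul1r -ef1 mulrDl (heV w hw) add0r.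
have hve : v * e = v by rewrite -{2}[v]mulr1 -ef1 mulrDr (hVf v hv) addr0.
apply: (E_span (p := - (d * c')) (q := c') (r := d) _ Hd).
rewrite hx hy -ef1 !mulrDl !mulrDr -!scalerAl -!scalerAr ee ff ef fe (heV w hw) (hVf v hv)
  (Vsq v w hv hw) hfw hve !scaler0 !addr0 !add0r.
lcsolve4 v w e f.
Qed.

Lemma E3 (F : fieldType) (A : algType F) : case_ii A -> ~ case_iii A.
Proof.
move=> [V [Vs [Hdec Huniq] Vsq]] [W [e [f [[Ws [Wdec Wuniq] _ _ _] [ee ff ef fe ef1]]]]].
have en0 : e != 0.
  apply/eqP => he; have [h1 _ _] : [/\ (1 : F) = 0, (0 : F) = 0 & (0 : A) = 0].
    by apply: (Wuniq _ _ _ Ws.1); rewrite he scaler0 scale0r !addr0.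
  by move/eqP: h1; rewrite oner_eq0.
have en1 : e != 1.
  apply/eqP => he; have hf : f = 0.
    by move/eqP: ef1; rewrite he -subr_eq0 addrC addKr => /eqP.
  have [_ h1 _] : [/\ (0 : F) = 0, (1 : F) = 0 & (0 : A) = 0].
    by apply: (Wuniq _ _ _ Ws.1); rewrite hf scale0r scaler0 !addr0.
  by move/eqP: h1; rewrite oner_eq0.
have [c [n [hn he]]] := Hdec e.
have hnn := Vsq n n hn hn.
have hV : V ((c + c - 1) *: n + 0) by apply: Vs.2; [exact: hn | exact: Vs.1].
have [h1 h2] : c * c - c = 0 /\ (c + c - 1) *: n + 0 = 0.
  apply: Huniq hV _; rewrite addr0.
  have : e * e - e = 0 by rewrite ee subrr.
  rewrite he => <-.
  rewrite !mulrDl !mulrDr -!scalerAl -!scalerAr !mul1r !mulr1 hnn ?scaler0 ?addr0.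
  lcsolve2 n (1 : A).
rewrite addr0 in h2.
have : c * (c - 1) = 0 by rewrite mulrBr mulr1.
move/eqP; rewrite mulf_eq0 subr_eq0 => /orP [/eqP hc | /eqP hc].
- move: h2; rewrite hc add0r sub0r scaleN1r => /eqP; rewrite oppr_eq0 => /eqP hn0.
  by move/eqP: en0; apply; rewrite he hc hn0 scale0r addr0.
- move: h2; rewrite hc addrK scale1r => hn0.
  by move/eqP: en1; apply; rewrite he hc hn0 scale1r addr0.
Qed.

Unset Implicit Arguments.

Theorem theorem5p7 (F : fieldType) (A : algType F) :
  dim_ge4 (fun _ : A => True) ->
  [\/ case_i A /\ ~ case_ii A /\ ~ case_iii A,
      ~ case_i A /\ case_ii A /\ ~ case_iii A
    | ~ case_i A /\ ~ case_ii A /\ case_iii A].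
Proof.
move=> [a0 [b0 [c0 [d0 [_ _ _ _ H4]]]]].
case: (classic (case_i A)) => hi.
  by constructor 1; split => //; split => [hii|hiii]; [exact: E1 hii hi|exact: E2 hiii hi].
have NI := notI_NI hi.
case: (classic (exists e : A, e * e = e /\ e != 0 /\ e != 1)) => [[e [ee [en0 en1]]]|hne].
  have hiii := case2 ee en0 en1 NI H4.
  by constructor 3; split => //; split => // hii; exact: E3 hii hiii.
have NE : forall e : A, e * e = e -> e = 0 \/ e = 1.
  move=> e ee; apply: NNPP => /not_or_and [h0 h1]; apply: hne; exists e.
  by split => //; split; apply/eqP.
have hii := case1 NI H4 NE.
by constructor 2; split => //; split => // hiii; exact: E3 hii hiii.
Qed.
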